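(* For every positive integer $t$ and every graph $G$ with $\alpha(G)\leq 2$ which does not have $K_t$ as an odd minor, we have $\chi(G)\leq \lceil \frac32(t-1)\rceil$.
   Context: All graphs are finite and simple; $\alpha(G)$ is the independence number and $\chi(G)$ the chromatic number. A graph $G$ has $K_t$ as an odd minor if there exist vertex-disjoint trees $T_1,\dots,T_t\subseteq G$ and functions $\chi_i:V(T_i)\to\{\text{black},\text{white}\}$ such that (i) for every $i$, $\chi_i$ is a proper $2$-coloring of $T_i$, and (ii) for all $i\neq j$ there are vertices $x_i\in V(T_i)$, $x_j\in V(T_j)$ with $\{x_i,x_j\}\in E(G)$ and $\chi_i(x_i)=\chi_j(x_j)$. *)

(* Defs.v *)
From mathcomp Require Import all_boot.
Set Implicit Arguments. Unset Strict Implicit. Unset Printing Implicit Defensive.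

Definition simple_graph (T : finType) (e : rel T) : Prop :=
  symmetric e /\ irreflexive e.

Definition independent (T : finType) (e : rel T) (S : {set T}) : bool :=
  [forall x in S, forall y in S, ~~ e x y].

Definition alpha (T : finType) (e : rel T) : nat :=
  \max_(S : {set T} | independent e S) #|S|.

Definition proper_coloring (T : finType) (e : rel T) (k : nat) (c : T -> 'I_k) : Prop :=
  forall x y, e x y -> c x != c y.

Definition colorable (T : finType) (e : rel T) (k : nat) : Prop :=
  exists c : T -> 'I_k, proper_coloring e c.

Definition colorableb (T : finType) (e : rel T) (k : nat) : bool :=
  [exists c : {ffun T -> 'I_k}, [forall x, forall y, e x y ==> (c x != c y)]].

Lemma colorableb_card (T : finType) (e : rel T) :
  irreflexive e -> exists k, colorableb e k.
Proof.
move=> irr; exists #|T|; apply/existsP.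
exists [ffun x => enum_rank x]; apply/forallP => x; apply/forallP => y.
apply/implyP => exy; rewrite !ffunE; apply/negP => /eqP/enum_rank_inj exy'.
by move: exy; rewrite exy' irr.
Qed.

(* chi(G): least k admitting a proper k-colouring (0 if e is not irreflexive,
   a case excluded by the simple-graph hypothesis). *)
Definition chi (T : finType) (e : rel T) : nat :=
  match boolP [forall x, ~~ e x x] with
  | AltTrue h => ex_minn (colorableb_card (fun x => negbTE (forallP h x)))
  | AltFalse _ => 0
  end.

(* A subgraph (V, F) of G = (T, e) that is a tree:
   F is a symmetric edge relation contained in e, with both endpoints in V,
   V is nonempty, (V, F) is connected, and it has exactly |V| - 1 edges
   (counted as ordered pairs: 2(|V|-1)). *)
Definition restr_rel (T : finType) (V : {set T}) (F : rel T) : rel T :=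
  fun x y => [&& x \in V, y \in V & F x y].

Definition is_subtree (T : finType) (e : rel T) (V : {set T}) (F : rel T) : Prop :=
  [/\ V != set0,
      symmetric F,
      (forall x y, F x y -> [/\ e x y, x \in V & y \in V]),
      (forall x y, x \in V -> y \in V -> connect (restr_rel V F) x y)
    & #|[set p : T * T | F p.1 p.2]| = 2 * (#|V| - 1)].

(* G has K_t as an odd minor: vertex-disjoint trees T_1..T_t with proper
   2-colourings (bool = black/white) such that for all i <> j there is an
   edge of G between T_i and T_j whose endpoints have the same colour. *)
Definition has_odd_minor (T : finType) (e : rel T) (t : nat) : Prop :=
  exists (V : 'I_t -> {set T}) (F : 'I_t -> rel T) (col : 'I_t -> T -> bool),
    [/\ (forall i, is_subtree e (V i) (F i)),
        (forall i j, i != j -> [disjoint V i & V j]),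
        (forall i x y, F i x y -> col i x != col i y)
      & (forall i j, i != j ->
           exists x y, [/\ x \in V i, y \in V j, e x y & col i x = col j y])].

(* Main.v *)
Require Import Defs.
From mathcomp Require Import all_boot zify.
Set Implicit Arguments. Unset Strict Implicit. Unset Printing Implicit Defensive.

Definition tri3 (T : finType) (e : rel T) : Prop :=
  forall x y w, x != y -> y != w -> x != w -> ~~ e x y -> ~~ e y w -> e x w.

Definition piece (T : finType) := (T + (T * T * T))%type.

Definition pseq (T : finType) (p : piece T) : seq T :=
  match p with inl v => [:: v] | inr (x, z, y) => [:: x; z; y] end.
Definition pverts (T : finType) (p : piece T) : {set T} := [set u in pseq p].
Definition pF (T : finType) (p : piece T) : rel T :=
  match p with
  | inl _ => fun _ _ => false
  | inr (x, z, y) => fun u w =>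
      ((u == z) && ((w == x) || (w == y))) || ((w == z) && ((u == x) || (u == y)))
  end.
Definition pcol (T : finType) (p : piece T) : T -> bool :=
  match p with inl _ => fun _ => false | inr (_, z, _) => fun u => u == z end.
Definition pvalid (T : finType) (e : rel T) (p : piece T) : bool :=
  match p with inl _ => true | inr (x, z, y) => [&& e z x, e z y, ~~ e x y & x != y] end.
Definition pcompat (T : finType) (e : rel T) (p q : piece T) : bool :=
  [disjoint pverts p & pverts q] &&
  match p, q with inl v, inl w => e v w | _, _ => true end.

Lemma P3_distinct (T : finType) (e : rel T) (irr : irreflexive e) (x z y : T) :
  e z x -> e z y -> x != y -> [/\ z != x, z != y & x != y].
Proof.
move=> zx zy xy; split => //; apply/eqP => E; [move: zx | move: zy]; by rewrite E irr.
Qed.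

Lemma piece_subtree (T : finType) (e : rel T) (sym : symmetric e) (irr : irreflexive e)
  (p : piece T) : pvalid e p -> is_subtree e (pverts p) (pF p).
Proof.
case: p => [v|[[x z] y]] /=.
  move=> _; split.
  - by apply/set0Pn; exists v; rewrite !inE.
  - by [].
  - by [].
  - move=> u w; rewrite !inE => /eqP-> /eqP->; exact: connect0.
  - have -> : #|pverts (inl v : piece T)| = 1 by rewrite cardsE; apply/card_uniqP.
    apply/eqP; rewrite muln0 cards_eq0; apply/eqP/setP => q; by rewrite !inE.
case/and4P => zx zy nxy xy.
have [zx' zy' _] := P3_distinct irr zx zy xy.
have Fsym : symmetric (pF (inr (x, z, y))).
  by move=> u w /=; rewrite orbC.
split.
- by apply/set0Pn; exists x; rewrite !inE eqxx.
- exact: Fsym.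
- move=> u w /=; rewrite !inE.
  case/orP => /andP [/eqP -> /orP [] /eqP ->]; rewrite ?eqxx ?orbT //=.
  all: try (by rewrite ?zx ?zy ?(sym x z) ?(sym y z) ?zx ?zy).
- have toz : forall u, u \in pverts (inr (x, z, y)) ->
      connect (restr_rel (pverts (inr (x, z, y))) (pF (inr (x, z, y)))) u z.
    move=> u; rewrite !inE => H.
    have zV : z \in pverts (inr (x, z, y)) by rewrite !inE eqxx orbT.
    case/or3P: H => /eqP ->; try exact: connect0;
      by apply: connect1; rewrite /restr_rel /= !inE !eqxx ?orbT ?andbT.
  move=> u w uV wV; apply: connect_trans (toz u uV) _.
  rewrite sym_connect_sym; first exact: toz.
  move=> a b; have := Fsym a b; rewrite /restr_rel /= => ->.
  by case: (a \in _); case: (b \in _).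
- have -> : #|pverts (inr (x, z, y))| = 3.
    rewrite cardsE; apply/card_uniqP => /=.
    by rewrite !inE negb_or (eq_sym x z) zx' xy zy' .
  transitivity #|[:: (z, x); (x, z); (z, y); (y, z)]|; last first.
    apply/card_uniqP => /=; rewrite !inE !xpair_eqE.
    by rewrite (eq_sym x z) (eq_sym y z) (negbTE zx') (negbTE zy') (negbTE xy) !andbF.
  apply: eq_card => -[a b]; rewrite !inE /= !xpair_eqE.
  by case: (a == z); case: (b == x); case: (b == y); case: (a == x); case: (a == y);
     case: (b == z).
Qed.


Lemma pF_col (T : finType) (e : rel T) (irr : irreflexive e) (p : piece T) u w :
  pvalid e p -> pF p u w -> pcol p u != pcol p w.
Proof.
case: p => [v|[[x z] y]] //= /and4P [zx zy nxy xy].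
have [zx' zy' _] := P3_distinct irr zx zy xy.
case/orP => /andP [/eqP -> /orP [] /eqP ->];
  by rewrite ?eqxx ?(eq_sym x z) ?(eq_sym y z) ?(negbTE zx') ?(negbTE zy').
Qed.

Lemma nonadj2 (T : finType) (e : rel T) (sym : symmetric e) (tri : tri3 e) (x y v : T) :
  ~~ e x y -> x != y -> v != x -> v != y -> e v x || e v y.
Proof.
move=> nxy xy vx vy; apply/negPn/negP => /norP [a b].
have := tri x v y; rewrite eq_sym vx vy xy sym a b => /(_ isT isT isT isT isT).
by rewrite (negbTE nxy).
Qed.

Lemma white_edge (T : finType) (e : rel T) (sym : symmetric e) (irr : irreflexive e)
  (tri : tri3 e) (p q : piece T) :
  pvalid e p -> pvalid e q -> pcompat e p q ->
  exists u w, [/\ u \in pverts p, w \in pverts q, e u w & pcol p u = pcol q w].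
Proof.
move=> vp vq /andP [dis c].
have inP : forall (r : piece T) u, (u \in pverts r) = (u \in pseq r) by move=> r u; rewrite inE.
case: p vp dis c => [v|[[x z] y]]; case: q vq => [w|[[x' z'] y']] //=.
- by move=> _ _ _ vw; exists v, w; rewrite !inE !eqxx.
- move: x' z' y' => x z y.
  case/and4P => zx zy nxy xy _ dis _.
  have [zx' zy' _] := P3_distinct irr zx zy xy.
  have vV : v \in pverts (inl v : piece T) by rewrite !inE.
  have := disjointFr dis vV; rewrite !inE => /norP [vx /norP [_ vy]].
  have [vx'|vy'] := orP (nonadj2 sym tri nxy xy vx vy).
    by exists v, x; rewrite !inE !eqxx ?orbT (eq_sym x z) (negbTE zx').
  by exists v, y; rewrite !inE !eqxx ?orbT (eq_sym y z) (negbTE zy').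
- move=> _ /and4P [zx zy nxy xy] dis _.
  have [zx' zy' _] := P3_distinct irr zx zy xy.
  have wV : w \in pverts (inl w : piece T) by rewrite !inE.
  have := disjointFl dis wV; rewrite !inE => /norP [vx /norP [_ vy]].
  have [vx'|vy'] := orP (nonadj2 sym tri nxy xy vx vy).
    by exists x, w; rewrite !inE !eqxx ?orbT (eq_sym x z) (negbTE zx') sym.
  by exists y, w; rewrite !inE !eqxx ?orbT (eq_sym y z) (negbTE zy') sym.
- move=> /and4P [zx2 zy2 nxy2 xy2] /and4P [zx zy nxy xy] dis _.
  have [zx' zy' _] := P3_distinct irr zx zy xy.
  have [zx2' zy2' _] := P3_distinct irr zx2 zy2 xy2.
  have wV : x' \in pverts (inr (x', z', y')) by rewrite !inE eqxx.
  have := disjointFl dis wV; rewrite !inE => /norP [vx /norP [_ vy]].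
  have [vx'|vy'] := orP (nonadj2 sym tri nxy xy vx vy).
    by exists x, x'; rewrite !inE !eqxx ?orbT (eq_sym x z) (negbTE zx') (eq_sym x' z') (negbTE zx2') sym.
  by exists y, x'; rewrite !inE !eqxx ?orbT (eq_sym y z) (negbTE zy') (eq_sym x' z') (negbTE zx2') sym.
Qed.

Definition sstruct (T : finType) (e : rel T) (S : {set T}) (s : seq (piece T)) : bool :=
  [&& all (pvalid e) s, all (fun p => pverts p \subset S) s & pairwise (pcompat e) s].

Lemma minor_of_struct (T : finType) (e : rel T) (sym : symmetric e) (irr : irreflexive e)
  (tri : tri3 e) (S : {set T}) (s : seq (piece T)) (t : nat) :
  sstruct e S s -> t <= size s -> has_odd_minor e t.
Proof.
case: s => [|p0 s'] sst.
  rewrite leqn0 => /eqP ->.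
  exists (fun _ => set0), (fun _ _ _ => false), (fun _ _ => false).
  by split; case.
set s := p0 :: s' in sst *.
case/and3P: sst => /(all_nthP p0) Hv _ /(pairwiseP p0) Hp ts.
have lt i : (i : 'I_t) < size s by apply: leq_trans (ltn_ord i) ts.
have comp (i j : 'I_t) : i < j -> pcompat e (nth p0 s i) (nth p0 s j).
  by move=> ij; apply: Hp => //; rewrite inE; apply: lt.
exists (fun i => pverts (nth p0 s i)), (fun i => pF (nth p0 s i)),
  (fun i => pcol (nth p0 s i)).
split.
- by move=> i; apply: piece_subtree => //; apply: Hv; apply: lt.
- move=> i j ij; have [lij|lji|eij] := ltngtP i j.
  + by case/andP: (comp _ _ lij).
  + by rewrite disjoint_sym; case/andP: (comp _ _ lji).
  + by move: ij; rewrite (val_inj eij) eqxx.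
- by move=> i x y; apply: pF_col => //; apply: Hv; apply: lt.
- move=> i j ij; have [lij|lji|eij] := ltngtP i j.
  + by apply: white_edge => //; [apply: Hv; apply: lt | apply: Hv; apply: lt | exact: comp].
  + have [u [w [uV wV euw cuw]]] := white_edge sym irr tri (Hv _ (lt j)) (Hv _ (lt i)) (comp _ _ lji).
    by exists w, u; split => //; rewrite sym.
  + by move: ij; rewrite (val_inj eij) eqxx.
Qed.


Definition colors (T : finType) (e : rel T) (S : {set T}) (k : nat) : Prop :=
  exists col : T -> nat, (forall x, x \in S -> col x < k) /\
    (forall x y, x \in S -> y \in S -> e x y -> col x != col y).

Lemma colors0 (T : finType) (e : rel T) : colors e set0 0.
Proof. by exists (fun _ => 0); split => x; rewrite inE. Qed.

Lemma colors_sub (T : finType) (e : rel T) (S S0 : {set T}) k :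
  S0 \subset S -> colors e S k -> colors e S0 k.
Proof.
move=> /subsetP sub [col [H1 H2]]; exists col; split.
  by move=> x /sub; apply: H1.
by move=> x y /sub xS /sub yS; apply: H2.
Qed.

Lemma colors_add (T : finType) (e : rel T) (S I : {set T}) k :
  colors e S k -> (forall u v, u \in I -> v \in I -> ~~ e u v) -> colors e (S :|: I) k.+1.
Proof.
move=> [col [H1 H2]] HI.
exists (fun x => if x \in S then col x else k); split.
  move=> x; case: ifP => xS _; last by [].
  by apply: leq_trans (H1 x xS) _.
move=> x y; rewrite !inE; case: ifP => xS; case: ifP => yS /= xI yI exy.
- exact: H2.
- by rewrite neq_ltn H1.
- by rewrite neq_ltn H1 ?orbT.
- by move: (HI x y xI yI); rewrite exy.
Qed.

Lemma indep1 (T : finType) (e : rel T) (irr : irreflexive e) (v : T) :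
  forall u w, u \in [set v] -> w \in [set v] -> ~~ e u w.
Proof. by move=> u w; rewrite !inE => /eqP-> /eqP->; rewrite irr. Qed.

Lemma indep2 (T : finType) (e : rel T) (sym : symmetric e) (irr : irreflexive e) (a b : T) :
  ~~ e a b -> forall u w, u \in [set a; b] -> w \in [set a; b] -> ~~ e u w.
Proof.
move=> nab u w; rewrite !inE => /orP [] /eqP-> /orP [] /eqP->;
  by rewrite ?irr // sym.
Qed.

Definition claim (T : finType) (e : rel T) (S : {set T}) : Prop :=
  exists s, sstruct e S s /\ exists k, colors e S k /\ 2 * k <= 3 * size s + 1.

Lemma sstruct_sub (T : finType) (e : rel T) (S S' : {set T}) s :
  S' \subset S -> sstruct e S' s -> sstruct e S s.
Proof.
move=> sub /and3P [a b c]; apply/and3P; split => //.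
by apply/allP => p /(allP b) H; apply: subset_trans H sub.
Qed.

Lemma pairwise_mem (T : eqType) (r : rel T) (s : seq T) x y :
  pairwise r s -> x \in s -> y \in s -> x != y -> r x y || r y x.
Proof.
move=> /(pairwiseP x) H xs ys xy.
have ix : index x s \in gtn (size s) by rewrite inE index_mem.
have iy : index y s \in gtn (size s) by rewrite inE index_mem.
have [lt|gt|eq] := ltngtP (index x s) (index y s).
- by have := H _ _ ix iy lt; rewrite !nth_index // => ->.
- by have := H _ _ iy ix gt; rewrite !nth_index // => ->; rewrite orbT.
- by move: xy; rewrite -(nth_index x xs) -(nth_index x ys) eq eqxx.
Qed.

Lemma cons_struct (T : finType) (e : rel T) (S S' : {set T}) s (p : piece T) :
  sstruct e S' s -> S' \subset S -> pvalid e p -> pverts p \subset S ->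
  [disjoint pverts p & S'] ->
  (forall v w, p = inl v -> inl w \in s -> e v w) ->
  sstruct e S (p :: s).
Proof.
move=> sst sub vp pS dis sing.
have /and3P [a b c] := sstruct_sub sub sst.
case/and3P: sst => _ b' _.
apply/and3P; split => /=; first by rewrite vp.
  by rewrite pS.

rewrite c andbT; apply/allP => q qs.
apply/andP; split.
  exact: disjointWr (allP b' q qs) dis.
case: p vp pS dis sing => // v _ _ _ sing; case: q qs => // w ws.
exact: sing.
Qed.


Lemma pverts_inl (T : finType) (v : T) : pverts (inl v : piece T) = [set v].
Proof. by apply/setP => u; rewrite !inE ?orbA. Qed.

Lemma pverts_inr (T : finType) (x z y : T) : pverts (inr (x, z, y) : piece T) = [set x; z; y].
Proof. by apply/setP => u; rewrite !inE ?orbA. Qed.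

Lemma sing_in (T : finType) (e : rel T) (S : {set T}) s (w : T) :
  sstruct e S s -> inl w \in s -> w \in S.
Proof.
case/and3P => _ /allP H _ /H /subsetP; apply; by rewrite pverts_inl inE.
Qed.

Lemma red_T1 (T : finType) (e : rel T) (irr : irreflexive e) (S : {set T}) (v : T) :
  v \in S -> (forall w, w \in S -> w != v -> e v w) -> claim e (S :\ v) -> claim e S.
Proof.
move=> vS Hv [s [sst [k [col ineq]]]].
exists (inl v :: s); split.
  apply: cons_struct (sst) _ _ _ _ _ => //.
  - exact: subsetDl.
  - by rewrite pverts_inl sub1set.
  - by rewrite pverts_inl disjoints1 !inE eqxx.
  - move=> v' w [<-] ws; have := sing_in sst ws; rewrite !inE => /andP [wv wS].
    exact: Hv.
exists k.+1; split; last by rewrite /=; lia.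
apply: (colors_sub _ (colors_add col (@indep1 _ _ irr v))).
by apply/subsetP => u uS; rewrite !inE uS andbT; case: (u == v).
Qed.

Lemma red_T14 (T : finType) (e : rel T) (sym : symmetric e) (irr : irreflexive e)
  (tri : tri3 e) (S : {set T}) (d c : T) :
  d \in S -> c \in S -> d != c -> ~~ e d c ->
  (forall a b, a \in S -> b \in S -> a != d -> a != c -> ~~ e d a ->
     b != c -> b != d -> ~~ e c b -> ~~ e a b) ->
  claim e (S :\: [set d; c]) -> claim e S.
Proof.
move=> dS cS dc ndc H14 [s [sst [k [col ineq]]]].
have inS' w : inl w \in s -> [/\ w != d, w != c & w \in S].
  by move=> /(sing_in sst); rewrite !inE negb_or => /andP [/andP [wd wc] wS].
have key : (forall w, inl w \in s -> e d w) \/ (forall w, inl w \in s -> e c w).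
  case: (boolP [forall w, (inl w \in s) ==> e d w]) => [/forallP Hd|/forallPn [w1]].
    by left => w ws; exact: (implyP (Hd w)).
  rewrite negb_imply => /andP [w1s nw1]; right => w2 w2s; apply/negPn/negP => nw2.
  have [w1d w1c w1S] := inS' _ w1s; have [w2d w2c w2S] := inS' _ w2s.
  case: (eqVneq w1 w2) => [E|w12].
    have : e d c by apply: (tri d w1 c) => //; [rewrite eq_sym | rewrite sym E].
    by rewrite (negbTE ndc).
  case/and3P: (sst) => _ _ pw.
  have w12' : (inl w1 : piece T) != inl w2 by apply: contra w12 => /eqP [->].
  have := pairwise_mem pw w1s w2s w12'.
  move=> /orP [] /andP [_ ew]; move: (H14 w1 w2 w1S w2S w1d w1c nw1 w2c w2d nw2);
    by rewrite ?ew // sym ew.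
have sub : S \subset (S :\: [set d; c]) :|: [set d; c].
  by apply/subsetP => u uS; rewrite !inE uS andbT; case: (u == d); case: (u == c).
have dis0 (v : T) : v \in [set d; c] -> [disjoint pverts (inl v : piece T) & S :\: [set d; c]].
  by move=> vdc; rewrite pverts_inl disjoints1 inE vdc.
have cS' (v : T) : v \in S -> pverts (inl v : piece T) \subset S by rewrite pverts_inl sub1set.
case: key => Hk.
  exists (inl d :: s); split.
    apply: cons_struct (sst) _ _ _ _ _ => //; first exact: subsetDl.
    - exact: cS'.
    - by apply: dis0; rewrite !inE eqxx.
    - by move=> v w [<-]; apply: Hk.
  exists k.+1; split; last by rewrite /=; lia.
  exact: (colors_sub sub (colors_add col (@indep2 _ _ sym irr d c ndc))).
exists (inl c :: s); split.
  apply: cons_struct (sst) _ _ _ _ _ => //; first exact: subsetDl.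
  - exact: cS'.
  - by apply: dis0; rewrite !inE eqxx orbT.
  - by move=> v w [<-]; apply: Hk.
exists k.+1; split; last by rewrite /=; lia.
exact: (colors_sub sub (colors_add col (@indep2 _ _ sym irr d c ndc))).
Qed.

Lemma disjU (T : finType) (A B C : {set T}) :
  [disjoint A & B :|: C] = [disjoint A & B] && [disjoint A & C].
Proof. by rewrite !disjoints_subset setCU subsetI. Qed.

Lemma disjD (T : finType) (A S W : {set T}) : A \subset W -> [disjoint A & S :\: W].
Proof.
move=> /subsetP AW; rewrite disjoints_subset; apply/subsetP => w wA.
by rewrite !inE (AW w wA).
Qed.

Lemma red_T3 (T : finType) (e : rel T) (sym : symmetric e) (irr : irreflexive e)
  (S : {set T}) (x1 z1 y1 x2 z2 y2 : T) :
  pvalid e (inr (x1, z1, y1)) -> pvalid e (inr (x2, z2, y2)) ->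
  pverts (inr (x1, z1, y1)) \subset S -> pverts (inr (x2, z2, y2)) \subset S ->
  [disjoint pverts (inr (x1, z1, y1)) & pverts (inr (x2, z2, y2))] -> ~~ e z1 z2 ->
  claim e (S :\: (pverts (inr (x1, z1, y1)) :|: pverts (inr (x2, z2, y2)))) -> claim e S.
Proof.
set p1 := inr (x1, z1, y1); set p2 := inr (x2, z2, y2).
move=> v1 v2 s1 s2 d12 nz [s [sst [k [col ineq]]]].
set W := pverts p1 :|: pverts p2; set S' := S :\: W.
have sub1 : S' \subset S' :|: pverts p2 by exact: subsetUl.
have sst2 : sstruct e (S' :|: pverts p2) (p2 :: s).
  apply: cons_struct sst sub1 v2 (subsetUr _ _) _ _ => //.
  by apply: disjD; exact: subsetUr.
exists (p1 :: p2 :: s); split.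
  apply: cons_struct sst2 _ v1 s1 _ _ => //.
    by rewrite subUset subsetDl s2.
  by rewrite disjU d12 andbT; apply: disjD; exact: subsetUl.
exists k.+3; split; last by rewrite /=; lia.
move: v1 v2 => /and4P [_ _ n1 _] /and4P [_ _ n2 _].
have c1 := colors_add col (@indep2 _ _ sym irr x1 y1 n1).
have c2 := colors_add c1 (@indep2 _ _ sym irr x2 y2 n2).
have c3 := colors_add c2 (@indep2 _ _ sym irr z1 z2 nz).
apply: (colors_sub _ c3); apply/subsetP => u uS; rewrite !inE uS andbT.
by case: (u == x1); case: (u == y1); case: (u == z1); case: (u == x2);
   case: (u == y2); case: (u == z2).
Qed.

Lemma red_T4 (T : finType) (e : rel T) (sym : symmetric e) (irr : irreflexive e)
  (S : {set T}) (x z y u : T) :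
  pvalid e (inr (x, z, y)) -> pverts (inr (x, z, y)) \subset S -> u \in S ->
  u \notin pverts (inr (x, z, y)) ->
  (forall w, w \in S -> w \notin pverts (inr (x, z, y)) -> w != u -> e u w) ->
  claim e (S :\: (u |: pverts (inr (x, z, y)))) -> claim e S.
Proof.
set p := inr (x, z, y).
move=> vp sp uS up Hu [s [sst [k [col ineq]]]].
set S' := S :\: (u |: pverts p).
have sst2 : sstruct e (S' :|: pverts p) (p :: s).
  apply: cons_struct sst (subsetUl _ _) vp (subsetUr _ _) _ _ => //.
  by apply: disjD; rewrite subsetUr.
exists (inl u :: p :: s); split.
  apply: cons_struct sst2 _ _ _ _ _ => //.
  - by rewrite subUset subsetDl sp.
  - by rewrite pverts_inl sub1set.
  - rewrite pverts_inl disjoints1 !inE; move: up; rewrite inE /= !inE eqxx /=.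
    by case: (u == x); case: (u == z); case: (u == y).
  - move=> v w [<-]; rewrite inE => /orP [/eqP //|ws].
    have := sing_in sst ws; rewrite !inE negb_or => /andP [/andP [wu wp] wS].
    by apply: Hu => //; rewrite inE /= !inE.
exists k.+3; split; last by rewrite /=; lia.
move: vp => /and4P [_ _ n1 _].
have c1 := colors_add col (@indep2 _ _ sym irr x y n1).
have c2 := colors_add c1 (@indep1 _ _ irr z).
have c3 := colors_add c2 (@indep1 _ _ irr u).
apply: (colors_sub _ c3); apply/subsetP => w wS; rewrite !inE wS andbT.
by case: (w == x); case: (w == y); case: (w == z); case: (w == u).
Qed.


Lemma card_out1 (T : finType) (A B : {set T}) (a : T) :
  #|A| <= #|B| -> a \in A -> a \notin B -> exists2 s, s \in B & s \notin A.
Proof.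
move=> AB aA aB.
case: (boolP [exists s in B, s \notin A]) => [/exists_inP [s sB sA] | /exists_inPn H];
  first by exists s.
exfalso.
have sub : B \subset A :\ a.
  apply/subsetP => s sB; rewrite !inE; have := H s sB; rewrite negbK => ->.
  by rewrite andbT; apply: contra aB => /eqP <-.
have := subset_leq_card sub; rewrite (cardsD1 a A) aA in AB; lia.
Qed.

Lemma card_out2 (T : finType) (A B : {set T}) (a x p : T) :
  #|A| <= #|B| -> a \in A -> x \in A -> a != x -> a \notin B -> x \notin B ->
  (forall s, s \in B -> s \notin A -> s = p) -> False.
Proof.
move=> AB aA xA ax aB xB H.
have sub : B :\ p \subset (A :\ a) :\ x.
  apply/subsetP => s; rewrite !inE => /andP [sp sB].
  have sA : s \in A by apply/negPn/negP => /(H s sB) E; move: sp; rewrite E eqxx.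
  rewrite sA andbT; apply/andP; split.
    by apply: contra xB => /eqP <-.
  by apply: contra aB => /eqP <-.
have := subset_leq_card sub.
have e1 := cardsD1 a A; have e2 := cardsD1 x (A :\ a); have e3 := cardsD1 p B.
rewrite aA in e1; rewrite !inE xA eq_sym ax in e2.
move: e3; case: (p \in B) => /= e3; lia.
Qed.

Lemma sub3 (T : finType) (S : {set T}) (x z y : T) :
  x \in S -> z \in S -> y \in S -> pverts (inr (x, z, y)) \subset S.
Proof. by move=> xS zS yS; apply/subsetP => w; rewrite !inE => /or3P [] /eqP ->. Qed.

Lemma disj33 (T : finType) (x1 z1 y1 x2 z2 y2 : T) :
  x1 != x2 -> x1 != z2 -> x1 != y2 -> z1 != x2 -> z1 != z2 -> z1 != y2 ->
  y1 != x2 -> y1 != z2 -> y1 != y2 ->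
  [disjoint pverts (inr (x1, z1, y1)) & pverts (inr (x2, z2, y2))].
Proof.
move=> *; rewrite disjoints_subset; apply/subsetP => w; rewrite !inE.
by case/or3P => /eqP ->; rewrite !negb_or; apply/and3P; split.
Qed.

Definition NH (T : finType) (e : rel T) (S : {set T}) (v : T) : {set T} :=
  [set w in S | (w != v) && ~~ e v w].

Lemma inNH (T : finType) (e : rel T) (S : {set T}) v w :
  (w \in NH e S v) = [&& w \in S, w != v & ~~ e v w].
Proof. by rewrite inE. Qed.

Lemma neq_of (T : eqType) (P : pred T) (x y : T) : P x -> ~~ P y -> x != y.
Proof. by move=> Px; apply: contra => /eqP <-. Qed.

Lemma core_cases (T : finType) (e : rel T) (sym : symmetric e) (irr : irreflexive e)
  (tri : tri3 e) (S : {set T}) : S != set0 ->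
  (exists2 v, v \in S & forall w, w \in S -> w != v -> e v w) \/
  (exists d c, [/\ d \in S, c \in S, d != c, ~~ e d c &
     forall a b, a \in S -> b \in S -> a != d -> a != c -> ~~ e d a ->
       b != c -> b != d -> ~~ e c b -> ~~ e a b]) \/
  (exists x1 z1 y1 x2 z2 y2,
     [/\ pvalid e (inr (x1, z1, y1)), pvalid e (inr (x2, z2, y2)),
         pverts (inr (x1, z1, y1)) \subset S, pverts (inr (x2, z2, y2)) \subset S &
         [disjoint pverts (inr (x1, z1, y1)) & pverts (inr (x2, z2, y2))] /\ ~~ e z1 z2]) \/
  (exists x z y u,
     [/\ pvalid e (inr (x, z, y)), pverts (inr (x, z, y)) \subset S, u \in S,
         u \notin pverts (inr (x, z, y)) &
         forall w, w \in S -> w \notin pverts (inr (x, z, y)) -> w != u -> e u w]).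
Proof.
move=> /set0Pn [v0 v0S].
case: (boolP [exists v in S, [forall w in S, (w != v) ==> e v w]]) =>
  [/exists_inP [v vS /forall_inP H]|noT1].
  by left; exists v => // w wS wv; exact: (implyP (H w wS)).
right.
have nh : forall v, v \in S -> exists w, w \in NH e S v.
  move=> v vS; move/exists_inPn: noT1 => /(_ v vS) /forall_inPn [w wS].
  by rewrite negb_imply => /andP [wv nvw]; exists w; rewrite inNH wS wv.
pose deg := fun v => #|NH e S v|.
have [z zS zmin] := arg_minnP deg v0S.
have {}zS : z \in S := zS.
have [z'0 z'0N] := nh z zS.
have [z' z'N z'min] := arg_minnP deg z'0N.
have {}z'N : z' \in NH e S z := z'N.
move: (z'N); rewrite inNH => /and3P [z'S z'z nzz'].
case: (boolP [forall a in S, forall b in S, (a != z) ==> (a != z') ==> ~~ e z a ==>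
   (b != z') ==> (b != z) ==> ~~ e z' b ==> ~~ e a b]) => [H14|].
  left; exists z, z'; split => //; first by rewrite eq_sym.
  move=> a b aS bS h1 h2 h3 h4 h5 h6.
  by move: (forall_inP (forall_inP H14 a aS) b bS); rewrite h1 h2 h3 h4 h5 h6.
move/forall_inPn => [a aS] /forall_inPn [b bS].
rewrite !negb_imply => /andP [az /andP [az' /andP [nza /andP [bz' /andP [bz
  /andP [nz'b /andP [eab _]]]]]]].
right.
have zz' : z != z' by rewrite eq_sym.
have nz'z : ~~ e z' z by rewrite sym.
have ezb : e z b by apply: (tri z z' b) => //; rewrite eq_sym.
have ez'a : e z' a by apply: (tri z' z a) => //; rewrite eq_sym.
have ab : a != b by apply: contraTneq eab => ->; rewrite irr.
have aN : a \in NH e S z by rewrite inNH aS az nza.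
have bN' : b \in NH e S z' by rewrite inNH bS bz' nz'b.
have zN' : z \in NH e S z' by rewrite inNH zS zz' nz'z.
have aNb : a \notin NH e S b by rewrite inNH (sym b a) eab !andbF.
have bNa : b \notin NH e S a by rewrite inNH eab !andbF.
have [s0 s0N s0Nz] := card_out1 (zmin b bS) aN aNb.
have [p pN pNz'] := card_out1 (z'min a aN) bN' bNa.
have sfacts : forall s, s \in NH e S b -> s \notin NH e S z ->
    [/\ s \in S, s != b, ~~ e b s, s != z & e z s].
  move=> s; rewrite inNH => /and3P [sS sb nbs] sNz.
  have sz : s != z by apply: (@neq_of _ (fun w => ~~ e b w)) => //=; rewrite negbK sym.
  by move: sNz; rewrite inNH sS sz /= negbK.
move: (pN); rewrite inNH => /and3P [pS pa nap].
have pz' : p != z' by apply: (@neq_of _ (fun w => ~~ e a w)) => //=; rewrite negbK sym.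
have ez'p : e z' p by move: pNz'; rewrite inNH pS pz' /= negbK.
case: (boolP [exists s in NH e S b, (s \notin NH e S z) && (s != p)]) =>
  [/exists_inP [s sN /andP [sNz sp]] | noS].
  have [sS sb nbs sz ezs] := sfacts s sN sNz.
  left; exists b, z, s, a, z', p; split.
  - by rewrite /= ezb ezs nbs eq_sym sb.
  - by rewrite /= ez'a ez'p nap eq_sym pa.
  - exact: sub3.
  - exact: sub3.
  split; last by [].
  apply: disj33 => //; first by rewrite eq_sym.
  - exact: (@neq_of _ (fun w => e a w)).
  - by rewrite eq_sym.
  - exact: (@neq_of _ (fun w => w \in NH e S z')).
  - by rewrite eq_sym; apply: (@neq_of _ (fun w => w \in NH e S z)).
  - by rewrite eq_sym; apply: (@neq_of _ (fun w => w \in NH e S z)).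
have Hs : forall s, s \in NH e S b -> s \notin NH e S z -> s = p.
  by move=> s sN sNz; move/exists_inPn: noS => /(_ s sN); rewrite sNz /= negbK => /eqP.
have E0 := Hs _ s0N s0Nz; rewrite E0 in s0N s0Nz.
have [_ pb nbp pz ezp] := sfacts p s0N s0Nz.
case: (boolP [exists x in NH e S z, (x != z') && (x != a)]) =>
  [/exists_inP [x xN /andP [xz' xa]] | noX].
  move: (xN); rewrite inNH => /and3P [xS xz nzx].
  have xNb : x \in NH e S b.
    apply/negPn/negP => xNb.
    by apply: (card_out2 (zmin b bS) aN xN _ aNb xNb Hs); rewrite eq_sym.
  move: xNb; rewrite inNH => /and3P [_ xb nbx].
  have eax : e a x by apply: (tri a z x) => //; [rewrite eq_sym | rewrite eq_sym | rewrite sym].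
  left; exists b, a, x, z, p, z'; split.
  - by rewrite /= eab eax nbx eq_sym xb.
  - by rewrite /= (sym p z) ezp (sym p z') ez'p nzz' zz'.
  - exact: sub3.
  - exact: sub3.
  split; last by [].
  apply: disj33 => //; try by rewrite eq_sym.
  exact: (@neq_of _ (fun w => w \in NH e S z)).
right; exists a, z', p, z; split.
- by rewrite /= ez'a ez'p nap eq_sym pa.
- exact: sub3.
- exact: zS.
- by rewrite !inE !negb_or (eq_sym z a) az zz' (eq_sym z p) pz.
move=> w wS wV wz; apply/negPn/negP => nzw.
have wN : w \in NH e S z by rewrite inNH wS wz nzw.
move/exists_inPn: noX => /(_ w wN); rewrite negb_and !negbK.
by case/orP => /eqP E; move: wV; rewrite !inE E eqxx ?orbT.
Qed.


Lemma claim0 (T : finType) (e : rel T) : claim e set0.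
Proof. by exists [::]; split => //; exists 0; split => //; exact: colors0. Qed.

Lemma cardD_lt (T : finType) (S W : {set T}) x : x \in S -> x \in W -> #|S :\: W| < #|S|.
Proof.
move=> xS xW; rewrite (cardsD1 x S) xS add1n ltnS; apply: subset_leq_card.
by apply/subsetP => u; rewrite !inE => /andP [uW ->]; rewrite andbT; apply: contra uW => /eqP ->.
Qed.

Lemma claim_all (T : finType) (e : rel T) (sym : symmetric e) (irr : irreflexive e)
  (tri : tri3 e) (S : {set T}) : claim e S.
Proof.
move: {2}#|S| (leqnn #|S|) => n; elim: n S => [|n IH] S HS.
  by move: HS; rewrite leqn0 cards_eq0 => /eqP ->; exact: claim0.
case: (eqVneq S set0) => [->|SN]; first exact: claim0.
have IH' (W : {set T}) x : x \in S -> x \in W -> claim e (S :\: W).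
  move=> xS xW; apply: IH; have := cardD_lt xS xW; lia.
case: (core_cases sym irr tri SN) => [[v vS Hv] | [[d [c [dS cS dc ndc H]]] |
  [[x1 [z1 [y1 [x2 [z2 [y2 [v1 v2 s1 s2 [d12 nz]]]]]]]] | [x [z [y [u [vp sp uS up Hu]]]]]]]].
- by apply: (red_T1 irr vS Hv (IH' [set v] v vS _)); rewrite inE.
- by apply: (red_T14 sym irr tri dS cS dc ndc H (IH' _ d dS _)); rewrite !inE eqxx.
- apply: (red_T3 sym irr v1 v2 s1 s2 d12 nz (IH' _ x1 _ _)).
    by apply: (subsetP s1); rewrite !inE eqxx.
  by rewrite !inE eqxx.
- by apply: (red_T4 sym irr vp sp uS up Hu (IH' _ u uS _)); rewrite !inE eqxx.
Qed.


Lemma tri_of_alpha (T : finType) (e : rel T) (sym : symmetric e) (irr : irreflexive e) :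
  alpha e <= 2 -> tri3 e.
Proof.
move=> al x y w xy yw xw nxy nyw; apply/negPn/negP => nxw.
have ind : independent e [set x; y; w].
  apply/forall_inP => u uS; apply/forall_inP => v vS.
  move: uS vS; rewrite !inE => /orP [/orP [] | ] /eqP -> /orP [/orP [] | ] /eqP ->;
    by rewrite ?irr // sym.
have := @leq_bigmax_cond _ (independent e) (fun S : {set T} => #|S|) _ ind; rewrite -/(alpha e).
have -> : #|[set x; y; w]| = 3.
  rewrite -pverts_inr cardsE; apply/card_uniqP => /=.
  by rewrite !inE negb_or xy xw yw.
move=> H; move: (leq_trans H al).
by [].
Qed.

Theorem proposition1p5 (t : nat) (T : finType) (e : rel T) :
  0 < t -> simple_graph e -> alpha e <= 2 -> ~ has_odd_minor e t ->
  chi e <= (3 * (t - 1)).+1 %/ 2.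
Proof.
move=> t0 [sym irr] al nom.
have tri := tri_of_alpha sym irr al.
have [s [sst [k [[col [H1 H2]] ineq]]]] := claim_all sym irr tri [set: T].
have st : size s < t.
  by rewrite ltnNge; apply/negP => ts; apply: nom; exact: (minor_of_struct sym irr tri sst ts).
have kb : k <= (3 * (t - 1)).+1 %/ 2 by rewrite leq_divRL //; lia.
have ck : colorableb e k.
  apply/existsP; exists [ffun x => Ordinal (H1 x (in_setT x))].
  apply/forallP => x; apply/forallP => y; apply/implyP => exy; rewrite !ffunE.
  by apply/eqP => -[E]; move: (H2 x y (in_setT x) (in_setT y) exy); rewrite E eqxx.
rewrite /chi; destruct (boolP [forall x, ~~ e x x]) as [h|h]; last by [].
by case: ex_minnP => m _ /(_ k ck) mk; apply: leq_trans mk kb.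
Qed.
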